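(* Let $P$ be a program of the imperative language described in the context, and suppose $\vdash P : M$ is derivable in the deterministic calculus, where $M$ is an $n\times n$ matrix with coefficients in $\{0,1,2\}^p\to\mathrm{mwp}^{\infty}$. Then for every $\vec a\in\{0,1,2\}^p$: $\vdash_{\mathrm{JK}} P : M[\vec a]$ is derivable in the original Jones–Kristiansen calculus if and only if no coefficient of $M[\vec a]$ equals $\infty$.
   Context: Language. Variables range over $X_1,\dots,X_n$ (a fixed finite set), and $b$ ranges over boolean expressions (unspecified; they play no role). Expressions: $e ::= X \mid X - Y \mid X + Y \mid X * Y$. Commands: $C ::= X = e \mid \texttt{if } b \texttt{ then } C \texttt{ else } C \mid \texttt{while } b \texttt{ do } \{C\} \mid \texttt{loop } X \{C\} \mid C;C$, where $\texttt{loop } X\{C\}$ executes $C$ $X$ times. A program is a sequential composition of commands. Semi-rings. $\mathrm{mwp}$ has carrier $\{0,m,w,p\}$ with $0<m<w<p$, addition $\max$, and $\alpha\times\beta=\max(\alpha,\beta)$ if $\alpha,\beta\neq0$, $0$ otherwise. $\mathrm{mwp}^\infty$ has carrier $\{0,m,w,p,\infty\}$ with $0<m<w<p<\infty$, addition $\max$, and $\alpha\times\beta=0$ if $\alpha,\beta\neq\infty$ and one of them is $0$, $\max(\alpha,\beta)$ otherwise. $\{0,1,2\}^p\to\mathrm{mwp}^\infty$ is the semi-ring of functions with pointwise operations (constants identified with constant functions). Matrices are $n\times n$ with componentwise $\oplus$, usual product $\otimes$, unit $\mathbf{1}$ ($m$ on the diagonal, $0$ elsewhere), closure $M^*=\mathbf{1}\oplus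 M\oplus M^2\oplus\cdots$. $M[\vec a]$ is $M$ with every coefficient evaluated at $\vec a$. $\delta(i,k)(\vec a)=m$ if $a_k=i$, $0$ otherwise. $\{^{\alpha}_i\}$ is the $n$-vector with $\alpha$ in row $i$ and $0$ elsewhere, $\{^\alpha_i,^\beta_j\}=\{^\alpha_i\}\oplus\{^\beta_j\}$, $\alpha V$ is scalar multiplication, $\mathbf{1}\xleftarrow{j}V$ is the unit matrix with column $j$ replaced by $V$, $\{^\alpha_i\to j\}$ is the matrix with $\alpha$ at $(i,j)$ and $0$ elsewhere, and $\mathrm{var}(e)$ is the set of variables of $e$. Original (non-deterministic) Jones–Kristiansen calculus $\vdash_{\mathrm{JK}}$, over $\mathrm{mwp}$: (E1) $\vdash_{\mathrm{JK}} X_i:\{^m_i\}$; (E2) $\vdash_{\mathrm{JK}} e:\bigoplus\{\{^w_i\}\mid X_i\in\mathrm{var}(e)\}$; (E3) for $\star\in\{+,-\}$, from $\vdash_{\mathrm{JK}}X_i:V_1$, $\vdash_{\mathrm{JK}}X_j:V_2$ infer $\vdash_{\mathrm{JK}}X_i\star X_j: pV_1\oplus V_2$; (E4) same premises, conclusion $V_1\oplus pV_2$; (A) from $\vdash_{\mathrm{JK}}e:V$ infer $\vdash_{\mathrm{JK}}X_j=e:\mathbf{1}\xleftarrow{j}V$; (C) $C_1;C_2:M_1\otimes M_2$; (I) $\texttt{if } b \texttt{ then } C_1\texttt{ else } C_2 : M_1\oplus M_2$; (L) from $\vdash_{\mathrm{JK}}C:M$, provided $M^*_{ii}=m$ for all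 $i$, infer $\vdash_{\mathrm{JK}}\texttt{loop } X_l\{C\}: M^*\oplus\{^p_l\to j\mid\exists i,\ M^*_{ij}=p\}$; (W) from $\vdash_{\mathrm{JK}}C:M$, provided $M^*_{ii}=m$ for all $i$ and $M^*_{ij}\neq p$ for all $i,j$, infer $\vdash_{\mathrm{JK}}\texttt{while } b\texttt{ do }\{C\}:M^*$. Deterministic calculus $\vdash$, over $\{0,1,2\}^p\to\mathrm{mwp}^\infty$: each application of rule E$^A$ receives its own choice index $k\in\{1,\dots,p\}$ ($p$ = number of applications). (E$^A$) for $\star\in\{+,-\}$: $\vdash X_i\star X_j:\delta(0,k)\{^m_i,^p_j\}\oplus\delta(1,k)\{^p_i,^m_j\}\oplus\delta(2,k)\{^w_i,^w_j\}$; (E$^M$) $\vdash X_i*X_j:\{^w_i,^w_j\}$; (E$^S$) $\vdash X_i:\{^m_i\}$; rules (A), (C), (I) as in the original calculus; (L$^\infty$) from $\vdash C:M$ infer $\vdash\texttt{loop } X_l\{C\}:M^*\oplus\{^\infty_j\to j\mid M^*_{jj}\neq m\}\oplus\{^p_l\to j\mid\exists i,\ M^*_{ij}=p\}$; (W$^\infty$) from $\vdash C:M$ infer $\vdash\texttt{while } b\texttt{ do }\{C\}:M^*\oplus\{^\infty_j\to j\mid M^*_{jj}\neq m\}\oplus\{^\infty_i\to j\mid M^*_{ij}=p\}$ (conditions understood pointwise for each choice assignment). *)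

(* Defs.v *)
From mathcomp Require Import all_boot.
Set Implicit Arguments. Unset Strict Implicit. Unset Printing Implicit Defensive.

(* Syntax: variables X_1..X_n are represented by 'I_n.                 *)
(* Boolean guards b play no role in either calculus and are omitted.   *)
Inductive expr (n : nat) : Type :=
| EVar of 'I_n
| ESub of 'I_n & 'I_n
| EAdd of 'I_n & 'I_n
| EMul of 'I_n & 'I_n.

Inductive cmd (n : nat) : Type :=
| Asgn of 'I_n & expr n
| Ite of cmd n & cmd n
| While of cmd n
| Loop of 'I_n & cmd n
| Seq of cmd n & cmd n.

Definition evar n (e : expr n) (k : 'I_n) : bool :=
  match e with
  | EVar i => k == i
  | ESub i j | EAdd i j | EMul i j => (k == i) || (k == j)
  end.

Inductive mwp := M0 | Mm | Mw | Mp.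
Definition mwp_rank (x : mwp) : nat :=
  match x with M0 => 0 | Mm => 1 | Mw => 2 | Mp => 3 end.
Definition mwp_le (x y : mwp) : Prop := mwp_rank x <= mwp_rank y.
Definition mwp_add (x y : mwp) : mwp := if mwp_rank x <= mwp_rank y then y else x.
Definition mwp_mul (x y : mwp) : mwp :=
  if (mwp_rank x == 0) || (mwp_rank y == 0) then M0 else mwp_add x y.

Inductive mwpi := I0 | Im | Iw | Ip | Iinf.
Definition mwpi_rank (x : mwpi) : nat :=
  match x with I0 => 0 | Im => 1 | Iw => 2 | Ip => 3 | Iinf => 4 end.
Definition mwpi_le (x y : mwpi) : Prop := mwpi_rank x <= mwpi_rank y.
Definition mwpi_add (x y : mwpi) : mwpi := if mwpi_rank x <= mwpi_rank y then y else x.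
Definition mwpi_mul (x y : mwpi) : mwpi :=
  if [&& mwpi_rank x != 4, mwpi_rank y != 4 & (mwpi_rank x == 0) || (mwpi_rank y == 0)]
  then I0 else mwpi_add x y.

Definition emb (x : mwp) : mwpi :=
  match x with M0 => I0 | Mm => Im | Mw => Iw | Mp => Ip end.

Definition mx (T : Type) (n : nat) := 'I_n -> 'I_n -> T.
Definition vc (T : Type) (n : nat) := 'I_n -> T.

Section Matrices.
Variables (T : Type) (add mul : T -> T -> T) (zero one : T) (le : T -> T -> Prop).
Variable n : nat.

Definition mx_add (A B : mx T n) : mx T n := fun i j => add (A i j) (B i j).
Definition mx_mul (A B : mx T n) : mx T n :=
  fun i j => \big[add/zero]_(k < n) mul (A i k) (B k j).
Definition mx_one : mx T n := fun i j => if i == j then one else zero.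
Fixpoint mx_pow (A : mx T n) (k : nat) : mx T n :=
  if k is k'.+1 then mx_mul (mx_pow A k') A else mx_one.

(* S = A^* = 1 (+) A (+) A^2 (+) ... : the (infinite) sum in the idempotent
   semi-ring, i.e. the least upper bound of the powers for the natural order. *)
Definition is_star (A S : mx T n) : Prop :=
  forall i j, (forall k, le (mx_pow A k i j) (S i j)) /\
              (forall x, (forall k, le (mx_pow A k i j) x) -> le (S i j) x).

Definition vc_add (U V : vc T n) : vc T n := fun i => add (U i) (V i).
Definition vc_scale (a : T) (V : vc T n) : vc T n := fun i => mul a (V i).
Definition vc_sgl (a : T) (i : 'I_n) : vc T n := fun k => if k == i then a else zero.
Definition col_replace (j : 'I_n) (V : vc T n) : mx T n :=
  fun i k => if k == j then V i else mx_one i k.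
End Matrices.

Section JK.
Variable n : nat.
Notation vec := (vc mwp n).
Notation mat := (mx mwp n).
Notation vadd := (@vc_add mwp mwp_add n).
Notation vscale := (@vc_scale mwp mwp_mul n).
Notation sgl := (@vc_sgl mwp M0 n).
Notation madd := (@mx_add mwp mwp_add n).
Notation mmul := (@mx_mul mwp mwp_add mwp_mul M0 n).
Notation star := (@is_star mwp mwp_add mwp_mul M0 Mm mwp_le n).

Inductive jk_expr : expr n -> vec -> Prop :=
| JK_E1 i : jk_expr (EVar i) (sgl Mm i)
| JK_E2 e : jk_expr e (fun k => if evar e k then Mw else M0)
| JK_E3sub i j V1 V2 : jk_expr (EVar i) V1 -> jk_expr (EVar j) V2 ->
    jk_expr (ESub i j) (vadd (vscale Mp V1) V2)
| JK_E3add i j V1 V2 : jk_expr (EVar i) V1 -> jk_expr (EVar j) V2 ->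
    jk_expr (EAdd i j) (vadd (vscale Mp V1) V2)
| JK_E4sub i j V1 V2 : jk_expr (EVar i) V1 -> jk_expr (EVar j) V2 ->
    jk_expr (ESub i j) (vadd V1 (vscale Mp V2))
| JK_E4add i j V1 V2 : jk_expr (EVar i) V1 -> jk_expr (EVar j) V2 ->
    jk_expr (EAdd i j) (vadd V1 (vscale Mp V2)).

Definition jk_loop_extra (l : 'I_n) (S : mat) : mat :=
  fun r c => if (r == l) && [exists i, mwp_rank (S i c) == 3] then Mp else M0.

Inductive jk_cmd : cmd n -> mat -> Prop :=
| JK_A j e V : jk_expr e V -> jk_cmd (Asgn j e) (col_replace M0 Mm j V)
| JK_C C1 C2 M1 M2 : jk_cmd C1 M1 -> jk_cmd C2 M2 -> jk_cmd (Seq C1 C2) (mmul M1 M2)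
| JK_I C1 C2 M1 M2 : jk_cmd C1 M1 -> jk_cmd C2 M2 -> jk_cmd (Ite C1 C2) (madd M1 M2)
| JK_L l C M S : jk_cmd C M -> star M S -> (forall i, S i i = Mm) ->
    jk_cmd (Loop l C) (madd S (jk_loop_extra l S))
| JK_W C M S : jk_cmd C M -> star M S -> (forall i, S i i = Mm) ->
    (forall i j, S i j <> Mp) -> jk_cmd (While C) S.
End JK.

(* choice vectors a in {0,1,2}^p ; choice indices are 0-based: 0..p-1 *)
Definition choice (p : nat) := 'I_p -> 'I_3.
Definition dcoef (p : nat) := choice p -> mwpi.

Section Det.
Variables (p n : nat).
Notation D := (dcoef p).
Definition dadd (f g : D) : D := fun a => mwpi_add (f a) (g a).
Definition dmul (f g : D) : D := fun a => mwpi_mul (f a) (g a).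
Definition dcst (x : mwpi) : D := fun _ => x.
Definition dle (f g : D) : Prop := forall a, mwpi_le (f a) (g a).

Definition delta (i : 'I_3) (k : nat) : D :=
  fun a => if (insub k : option 'I_p) is Some k' then
             (if a k' == i then Im else I0) else I0.

Notation vec := (vc D n).
Notation mat := (mx D n).
Notation vadd := (@vc_add D dadd n).
Notation vscale := (@vc_scale D dmul n).
Notation sgl := (@vc_sgl D (dcst I0) n).
Notation madd := (@mx_add D dadd n).
Notation mmul := (@mx_mul D dadd dmul (dcst I0) n).
Notation star := (@is_star D dadd dmul (dcst I0) (dcst Im) dle n).

Definition pair_vec (x : mwpi) (i : 'I_n) (y : mwpi) (j : 'I_n) : vec :=
  vadd (sgl (dcst x) i) (sgl (dcst y) j).

Definition EA_vec (k : nat) (i j : 'I_n) : vec :=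
  vadd (vadd (vscale (delta (@Ordinal 3 0 isT) k) (pair_vec Im i Ip j))
             (vscale (delta (@Ordinal 3 1 isT) k) (pair_vec Ip i Im j)))
       (vscale (delta (@Ordinal 3 2 isT) k) (pair_vec Iw i Iw j)).

(* det_expr k e V k' : e is typed by V using the choice indices k..k'-1 *)
Inductive det_expr : nat -> expr n -> vec -> nat -> Prop :=
| D_EAsub k i j : det_expr k (ESub i j) (EA_vec k i j) k.+1
| D_EAadd k i j : det_expr k (EAdd i j) (EA_vec k i j) k.+1
| D_EM k i j : det_expr k (EMul i j) (pair_vec Iw i Iw j) k
| D_ES k i : det_expr k (EVar i) (sgl (dcst Im) i) k.

Definition diag_inf (S : mat) : mat :=
  fun r c a => if (r == c) && (mwpi_rank (S c c a) != 1) then Iinf else I0.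
Definition loop_extra (l : 'I_n) (S : mat) : mat :=
  fun r c a => if (r == l) && [exists i, mwpi_rank (S i c a) == 3] then Ip else I0.
Definition p_inf (S : mat) : mat :=
  fun r c a => if mwpi_rank (S r c a) == 3 then Iinf else I0.

Inductive det_cmd : nat -> cmd n -> mat -> nat -> Prop :=
| D_A k j e V k' : det_expr k e V k' ->
    det_cmd k (Asgn j e) (col_replace (dcst I0) (dcst Im) j V) k'
| D_C k C1 M1 k1 C2 M2 k2 : det_cmd k C1 M1 k1 -> det_cmd k1 C2 M2 k2 ->
    det_cmd k (Seq C1 C2) (mmul M1 M2) k2
| D_I k C1 M1 k1 C2 M2 k2 : det_cmd k C1 M1 k1 -> det_cmd k1 C2 M2 k2 ->
    det_cmd k (Ite C1 C2) (madd M1 M2) k2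
| D_L k l C M S k' : det_cmd k C M k' -> star M S ->
    det_cmd k (Loop l C) (madd (madd S (diag_inf S)) (loop_extra l S)) k'
| D_W k C M S k' : det_cmd k C M k' -> star M S ->
    det_cmd k (While C) (madd (madd S (diag_inf S)) (p_inf S)) k'.
End Det.

(* |- P : M in the deterministic calculus, where p is the number of
   applications of rule E^A (indices 0..p-1, each used exactly once). *)
Definition det_derivable (p n : nat) (P : cmd n) (M : mx (dcoef p) n) : Prop :=
  det_cmd 0 P M p.

Definition eval_mx (p n : nat) (M : mx (dcoef p) n) (a : choice p) : mx mwpi n :=
  fun i j => M i j a.

(* Main.v *)
From HB Require Import structures.
Require Import Defs.
From mathcomp Require Import all_boot.
From Stdlib Require Import FunctionalExtensionality.
Set Implicit Arguments. Unset Strict Implicit. Unset Printing Implicit Defensive.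

Lemma mwpi_addA : associative mwpi_add. Proof. by do 3 case. Qed.
Lemma mwpi_addC : commutative mwpi_add. Proof. by do 2 case. Qed.
Lemma mwpi_add0 : left_id I0 mwpi_add. Proof. by case. Qed.
HB.instance Definition _ := Monoid.isComLaw.Build mwpi I0 mwpi_add mwpi_addA mwpi_addC mwpi_add0.

Lemma add_ninf x y : mwpi_add x y <> Iinf -> x <> Iinf /\ y <> Iinf.
Proof. by case: x; case: y. Qed.
Lemma add_inf_l y : mwpi_add Iinf y = Iinf. Proof. by case: y. Qed.
Lemma mul_inf_l y : mwpi_mul Iinf y = Iinf. Proof. by case: y. Qed.
Lemma mul_inf_r y : mwpi_mul y Iinf = Iinf. Proof. by case: y. Qed.
Lemma rank_le4 x : mwpi_rank x <= 4. Proof. by case: x. Qed.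
Lemma rank4 x : 4 <= mwpi_rank x -> x = Iinf. Proof. by case: x. Qed.

Lemma big_inf n (F : 'I_n -> mwpi) k0 : F k0 = Iinf ->
  \big[mwpi_add/I0]_(k < n) F k = Iinf.
Proof. by move=> H; rewrite (bigD1 k0) //= H add_inf_l. Qed.

Lemma big_eval p n (F : 'I_n -> dcoef p) a :
  (\big[@dadd p/dcst I0]_(k < n) F k) a = \big[mwpi_add/I0]_(k < n) F k a.
Proof.
apply: (big_rec2 (fun (y1 : dcoef p) y2 => y1 a = y2)) => // i y1 y2 _ <-.
by [].
Qed.

Lemma emb_add x y : emb (mwp_add x y) = mwpi_add (emb x) (emb y).
Proof. by case: x; case: y. Qed.
Lemma emb_mul x y : emb (mwp_mul x y) = mwpi_mul (emb x) (emb y).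
Proof. by case: x; case: y. Qed.
Lemma emb_rank x : mwpi_rank (emb x) = mwp_rank x. Proof. by case: x. Qed.
Lemma emb_ninf x : emb x <> Iinf. Proof. by case: x. Qed.

Definition unemb (x : mwpi) : mwp :=
  match x with I0 => M0 | Im => Mm | Iw => Mw | Ip => Mp | Iinf => Mp end.
Lemma unembK x : x <> Iinf -> emb (unemb x) = x. Proof. by case: x. Qed.

Lemma big_emb n (F : 'I_n -> mwp) :
  emb (\big[mwp_add/M0]_(k < n) F k) = \big[mwpi_add/I0]_(k < n) emb (F k).
Proof. by apply: (big_morph emb emb_add). Qed.

Section Ev.
Variables (p n : nat) (M : mx (dcoef p) n) (a : choice p).
Definition Ma : mx mwpi n := fun i j => M i j a.

Lemma pow_eval k i j :
  mx_pow (@dadd p) (@dmul p) (dcst I0) (dcst Im) M k i j a =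
  mx_pow mwpi_add mwpi_mul I0 Im Ma k i j.
Proof.
elim: k i j => [|k IH] i j /=.
  by rewrite /mx_one; case: (i == j).
rewrite /mx_mul big_eval; apply: eq_bigr => l _.
by rewrite /dmul IH.
Qed.
End Ev.

Lemma pow_emb n (M' : mx mwp n) (A : mx mwpi n) :
  (forall i j, emb (M' i j) = A i j) ->
  forall k i j, emb (mx_pow mwp_add mwp_mul M0 Mm M' k i j) =
                mx_pow mwpi_add mwpi_mul I0 Im A k i j.
Proof.
move=> H; elim=> [|k IH] i j /=.
  by rewrite /mx_one; case: (i == j).
rewrite /mx_mul big_emb; apply: eq_bigr => l _.
by rewrite emb_mul IH H.
Qed.

Definition istar n (A S : mx mwpi n) :=
  forall i j, (forall k, mwpi_rank (mx_pow mwpi_add mwpi_mul I0 Im A k i j) <= mwpi_rank (S i j)) /\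
    (forall x, (forall k, mwpi_rank (mx_pow mwpi_add mwpi_mul I0 Im A k i j) <= mwpi_rank x) ->
        mwpi_rank (S i j) <= mwpi_rank x).

Lemma star_eval p n (M S : mx (dcoef p) n) a :
  is_star (@dadd p) (@dmul p) (dcst I0) (dcst Im) (@dle p) M S ->
  istar (Ma M a) (Ma S a).
Proof.
move=> H i j; have [H1 H2] := H i j; split.
  by move=> k; have := H1 k a; rewrite pow_eval.
move=> x Hx.
pose g : dcoef p := fun b => if [forall t, b t == a t] then x else S i j b.
have Ha : [forall t, a t == a t] by apply/forallP.
suff: dle (S i j) g by move/(_ a); rewrite /g Ha.
apply: H2 => k b; rewrite /g; case: ifP => [/forallP Hb|_]; last exact: H1.
have -> : b = a by apply: functional_extensionality => t; apply/eqP.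
by rewrite /mwpi_le pow_eval.
Qed.

Lemma star_ge n (A S : mx mwpi n) i j : istar A S -> A i j = Iinf -> S i j = Iinf.
Proof.
move=> H HA; have [H1 _] := H i j; have := H1 1; rewrite /= /mx_mul.
rewrite (@big_inf _ _ i) ?mul_inf_r //.
  by move=> /rank4.
by rewrite HA mul_inf_r.
Qed.

Lemma star_jk n (M' : mx mwp n) (A S : mx mwpi n) :
  (forall i j, emb (M' i j) = A i j) -> istar A S -> (forall i j, S i j <> Iinf) ->
  is_star mwp_add mwp_mul M0 Mm mwp_le M' (fun i j => unemb (S i j)).
Proof.
move=> HM H HS i j; have [H1 H2] := H i j; split.
  move=> k; rewrite /mwp_le -emb_rank -(emb_rank (unemb _)) unembK // (pow_emb HM); exact: H1.
move=> x Hx; rewrite /mwp_le -emb_rank -(emb_rank x) unembK //; apply: H2 => k.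
by rewrite -(pow_emb HM) !emb_rank; apply: Hx.
Qed.

Lemma expr_mono p n k e (V : vc (dcoef p) n) k' : det_expr k e V k' -> k <= k'.
Proof. by case. Qed.

Lemma cmd_mono p n k C (M : mx (dcoef p) n) k' : det_cmd k C M k' -> k <= k'.
Proof.
elim=> //.
- by move=> ????? H; exact: expr_mono H.
- by move=> ??????? _ H1 _ H2; apply: leq_trans H1 H2.
- by move=> ??????? _ H1 _ H2; apply: leq_trans H1 H2.
Qed.

Lemma expr_ok p n k e (V : vc (dcoef p) n) k' : det_expr k e V k' -> k' <= p ->
  forall a, exists V', jk_expr e V' /\ forall i, emb (V' i) = V i a.
Proof.
case=> {k e V k'}.
- move=> k i j hk a.
  rewrite /EA_vec /vc_add /vc_scale /dadd /dmul /delta insubT /=.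
  case: (a (Sub k hk)) => [[|[|[|c]]] hc] //=.
  + exists (vc_add mwp_add (vc_sgl M0 Mm i) (vc_scale mwp_mul Mp (vc_sgl M0 Mm j))).
    split; first by apply: JK_E4sub; apply: JK_E1.
    move=> x; rewrite /pair_vec /vc_add /vc_scale /vc_sgl /dadd /dcst.
    by case: (x == i); case: (x == j).
  + exists (vc_add mwp_add (vc_scale mwp_mul Mp (vc_sgl M0 Mm i)) (vc_sgl M0 Mm j)).
    split; first by apply: JK_E3sub; apply: JK_E1.
    move=> x; rewrite /pair_vec /vc_add /vc_scale /vc_sgl /dadd /dcst.
    by case: (x == i); case: (x == j).
  + exists (fun x => if evar (ESub i j) x then Mw else M0).
    split; first by apply: JK_E2.
    move=> x; rewrite /pair_vec /vc_add /vc_scale /vc_sgl /dadd /dcst /=.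
    by case: (x == i); case: (x == j).
- move=> k i j hk a.
  rewrite /EA_vec /vc_add /vc_scale /dadd /dmul /delta insubT /=.
  case: (a (Sub k hk)) => [[|[|[|c]]] hc] //=.
  + exists (vc_add mwp_add (vc_sgl M0 Mm i) (vc_scale mwp_mul Mp (vc_sgl M0 Mm j))).
    split; first by apply: JK_E4add; apply: JK_E1.
    move=> x; rewrite /pair_vec /vc_add /vc_scale /vc_sgl /dadd /dcst.
    by case: (x == i); case: (x == j).
  + exists (vc_add mwp_add (vc_scale mwp_mul Mp (vc_sgl M0 Mm i)) (vc_sgl M0 Mm j)).
    split; first by apply: JK_E3add; apply: JK_E1.
    move=> x; rewrite /pair_vec /vc_add /vc_scale /vc_sgl /dadd /dcst.
    by case: (x == i); case: (x == j).
  + exists (fun x => if evar (EAdd i j) x then Mw else M0).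
    split; first by apply: JK_E2.
    move=> x; rewrite /pair_vec /vc_add /vc_scale /vc_sgl /dadd /dcst /=.
    by case: (x == i); case: (x == j).
- move=> k i j _ a.
  exists (fun x => if evar (EMul i j) x then Mw else M0).
  split; first by apply: JK_E2.
  move=> x; rewrite /pair_vec /vc_add /vc_scale /vc_sgl /dadd /dcst /=.
  by case: (x == i); case: (x == j).
- move=> k i _ a.
  exists (vc_sgl M0 Mm i); split; first by apply: JK_E1.
  by move=> x; rewrite /vc_sgl /dcst; case: (x == i).
Qed.

Lemma cmd_ok p n k C (M : mx (dcoef p) n) k' : det_cmd k C M k' -> k' <= p ->
  forall a, (forall i j, M i j a <> Iinf) ->
  exists M', jk_cmd C M' /\ forall i j, emb (M' i j) = M i j a.
Proof.
elim=> {k C M k'}.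
- move=> k j e V k' He hk a _.
  have [V' [HV' EV]] := expr_ok He hk a.
  exists (col_replace M0 Mm j V'); split; first exact: JK_A.
  move=> r c; rewrite /col_replace /mx_one /dcst.
  by case: (c == j) => //; case: (r == c).
- move=> k C1 M1 k1 C2 M2 k2 H1 IH1 H2 IH2 hk a Hinf.
  have hk1 : k1 <= p by apply: leq_trans (cmd_mono H2) hk.
  have [M1' [J1 E1]] : exists M', jk_cmd C1 M' /\ forall i j, emb (M' i j) = M1 i j a.
    apply: IH1 => // i j Hij; apply: (Hinf i j).
    by rewrite /mx_mul big_eval (@big_inf _ _ j) //= /dmul Hij mul_inf_l.
  have [M2' [J2 E2]] : exists M', jk_cmd C2 M' /\ forall i j, emb (M' i j) = M2 i j a.
    apply: IH2 => // i j Hij; apply: (Hinf i j).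
    by rewrite /mx_mul big_eval (@big_inf _ _ i) //= /dmul Hij mul_inf_r.
  exists (mx_mul mwp_add mwp_mul M0 M1' M2'); split; first exact: JK_C.
  move=> i j; rewrite /mx_mul big_eval big_emb; apply: eq_bigr => l _.
  by rewrite emb_mul E1 E2.
- move=> k C1 M1 k1 C2 M2 k2 H1 IH1 H2 IH2 hk a Hinf.
  have hk1 : k1 <= p by apply: leq_trans (cmd_mono H2) hk.
  have [M1' [J1 E1]] : exists M', jk_cmd C1 M' /\ forall i j, emb (M' i j) = M1 i j a.
    by apply: IH1 => // i j; have /add_ninf[] := Hinf i j.
  have [M2' [J2 E2]] : exists M', jk_cmd C2 M' /\ forall i j, emb (M' i j) = M2 i j a.
    by apply: IH2 => // i j; have /add_ninf[] := Hinf i j.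
  exists (mx_add mwp_add M1' M2'); split; first exact: JK_I.
  by move=> i j; rewrite /mx_add emb_add E1 E2.
- move=> k l C M S k' H IH HS hk a Hinf.
  have HSa := star_eval a HS.
  have Hs : forall i j, S i j a <> Iinf.
    by move=> i j; have /add_ninf[/add_ninf[]] := Hinf i j.
  have Hd : forall i j, diag_inf S i j a = I0.
    move=> i j; have /add_ninf[/add_ninf[_]] := Hinf i j.
    by rewrite /diag_inf; case: ifP.
  have [M' [J EM]] : exists M', jk_cmd C M' /\ forall i j, emb (M' i j) = M i j a.
    apply: IH => // i j Hij; apply: (Hs i j).
    exact: (star_ge HSa Hij).
  exists (mx_add mwp_add (fun i j => unemb (S i j a))
            (jk_loop_extra l (fun i j => unemb (S i j a)))).
  split.
    apply: JK_L J (star_jk EM HSa Hs) _.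
    move=> i; have := Hd i i; rewrite /diag_inf eqxx /=.
    by move: (Hs i i); rewrite /Ma; case: (S i i a).
  move=> i j; rewrite /mx_add /dadd emb_add unembK // Hd.
  rewrite [mwpi_add _ I0]mwpi_addC mwpi_add0; congr mwpi_add.
  rewrite /jk_loop_extra /loop_extra.
  have -> : [exists i0, mwp_rank (unemb (S i0 j a)) == 3] =
            [exists i0, mwpi_rank (S i0 j a) == 3].
    by apply: eq_existsb => i0; rewrite -emb_rank unembK.
  by case: ifP.
- move=> k C M S k' H IH HS hk a Hinf.
  have HSa := star_eval a HS.
  have Hs : forall i j, S i j a <> Iinf.
    by move=> i j; have /add_ninf[/add_ninf[]] := Hinf i j.
  have Hd : forall i j, diag_inf S i j a = I0.
    move=> i j; have /add_ninf[/add_ninf[_]] := Hinf i j.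
    by rewrite /diag_inf; case: ifP.
  have Hp : forall i j, p_inf S i j a = I0.
    move=> i j; have /add_ninf[_] := Hinf i j.
    by rewrite /p_inf; case: ifP.
  have [M' [J EM]] : exists M', jk_cmd C M' /\ forall i j, emb (M' i j) = M i j a.
    apply: IH => // i j Hij; apply: (Hs i j).
    exact: (star_ge HSa Hij).
  exists (fun i j => unemb (S i j a)).
  split.
    apply: JK_W J (star_jk EM HSa Hs) _ _.
      move=> i; have := Hd i i; rewrite /diag_inf eqxx /=.
      by move: (Hs i i); rewrite /Ma; case: (S i i a).
    move=> i j; have := Hp i j; rewrite /p_inf.
    by move: (Hs i j); rewrite /Ma; case: (S i j a).
  move=> i j; rewrite /mx_add /dadd unembK // Hd Hp.
  by case: (S i j a).
Qed.

Theorem theorem10 (n p : nat) (P : cmd n) (M : mx (dcoef p) n) :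
  det_derivable P M ->
  forall a : choice p,
    (exists M' : mx mwp n, jk_cmd P M' /\
       forall i j, emb (M' i j) = eval_mx M a i j)
    <-> (forall i j, eval_mx M a i j <> Iinf).
Proof.
move=> HD a; split.
  by move=> [M' [_ E]] i j; rewrite -E; apply: emb_ninf.
move=> H; exact: (cmd_ok HD (leqnn p) H).
Qed.
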